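(* Let $\square$ be a category with $\Delta_1[\tau]^*\subset\square\subset\mathbf{Pos}$ subcategories, $\Delta_1[\tau]^*$ wide in $\square$. For a monotone function $\phi:P_1\to P_2$ between posets the following are equivalent: (1) there exists a unique morphism of presheaves $\square[\phi]:\square[P_1]\to\square[P_2]$ such that $\iota_{P_2}\circ\square[\phi]=\mathrm{ner}_\square(\phi)\circ\iota_{P_1}$, where $\iota_{P}:\square[P]\hookrightarrow\mathrm{ner}_\square P$ are the inclusions; (2) for each finite Boolean interval $I$ of $P_1$, the restriction of $\phi$ to $I$ corestricts to a monotone function $I\to J$, $J$ a Boolean interval of $P_2$, which is isomorphic in the arrow category $\mathbf{Pos}^{[1]}$ to a $\square$-morphism.
   Context: $[1]=\{0<1\}$, $[1]^n$ the product poset ($[1]^0=[0]$). $\tau:[1]^2\to[1]^2$, $\tau(x,y)=(y,x)$. $\Delta_1[\tau]^*$ is the smallest subcategory of $\mathbf{Set}$ containing all functions between $[0]$ and $[1]$ and $\tau$, and closed under Cartesian products of functions; its objects are the $[1]^n$; ''wide'' means $\square$ has the same objects. $\mathbf{Pos}$ is the category of posets and monotone maps. An interval in a poset $P$ is a non-empty subset $[x,z]_P=\{y:x\leq y\leq z\}$; it is a Boolean interval if it is a Boolean lattice (for finite ones: isomorphic to some $[1]^k$). A cubical set is a presheaf $\square^{op}\to\mathbf{Set}$. For a poset $P$, $\mathrm{ner}_\square P$ is the cubical set $[1]^n\mapsto\mathbf{Pos}([1]^n,P)$ (action by precomposition), and $\square[P]\subseteq\mathrm{ner}_\square P$ is the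 subpresheaf of those monotone $\theta:[1]^n\to P$ whose image lies in a Boolean interval $I$ of $P$ such that the corestriction $[1]^n\to I$ is isomorphic, under $[1]^n$ (i.e. after composing with a poset isomorphism $I\cong[1]^k$), to a $\square$-morphism. Two monotone maps $f:A\to B$, $f':A'\to B'$ are isomorphic in $\mathbf{Pos}^{[1]}$ if there are poset isomorphisms $A\cong A'$, $B\cong B'$ intertwining them. *)

(* Defs.v *)
From HB Require Import structures.
From mathcomp Require Import all_boot all_order.
Unset Printing Implicit Defensive.
Import Order.Theory.
Local Open Scope order_scope.

(* The poset [1]^n, represented as boolean vectors of length n ([1]^0 = [0]). *)
Definition cube (n : nat) := {ffun 'I_n -> bool}.

Definition cle n (a b : cube n) : bool := [forall i, a i ==> b i].
Arguments cle {n} a b.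

(* Cartesian product of maps [1]^a -> [1]^b and [1]^c -> [1]^d, under the
   identification [1]^a x [1]^c = [1]^(a+c) by concatenation of coordinates. *)
Definition cube_prod a b c d (f : cube a -> cube b) (g : cube c -> cube d)
  : cube (a + c) -> cube (b + d) :=
  fun x =>
    let xl : cube a := [ffun j => x (lshift c j)] in
    let xr : cube c := [ffun j => x (rshift a j)] in
    [ffun i => match split i with inl j => f xl j | inr j => g xr j end].
Arguments cube_prod {a b c d} f g.

Definition cube_tau : cube 2 -> cube 2 := fun x => [ffun i => x (rev_ord i)].

(* Delta_1[tau]^* : the smallest subcategory containing all (monotone) maps
   between [0] and [1] and tau, closed under Cartesian products. *)
Inductive D1tau : forall m n, (cube m -> cube n) -> Prop :=
| D1_id n : @D1tau n n (fun x => x)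
| D1_face (b : bool) : @D1tau 0 1 (fun _ => [ffun _ => b])
| D1_degen : @D1tau 1 0 (fun _ => [ffun _ => false])
| D1_tau : @D1tau 2 2 cube_tau
| D1_comp m n p (f : cube m -> cube n) (g : cube n -> cube p) :
    @D1tau m n f -> @D1tau n p g -> @D1tau m p (fun x => g (f x))
| D1_prod a b c d (f : cube a -> cube b) (g : cube c -> cube d) :
    @D1tau a b f -> @D1tau c d g -> @D1tau (a + c) (b + d) (cube_prod f g).
Arguments D1tau {m n} f.

(* A category "square" with Delta_1[tau]^* (wide) <= square <= Pos: its objects
   are the [1]^n, its morphisms are given by the predicate Sq. *)
Definition cube_cat (Sq : forall m n, (cube m -> cube n) -> Prop) : Prop :=
  [/\ (forall m n (f : cube m -> cube n), D1tau f -> Sq m n f),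
      (forall m n (f : cube m -> cube n), Sq m n f ->
          forall a b, cle a b -> cle (f a) (f b)) &
      (forall m n p (f : cube m -> cube n) (g : cube n -> cube p),
          Sq m n f -> Sq n p g -> Sq m p (fun x => g (f x)))].

Section Posets.
Context {d : Order.disp_t} {T : porderType d}.

(* alpha restricts to a poset isomorphism from the interval [x,z] onto [1]^k
   (so [x,z] is a non-empty finite Boolean interval). *)
Definition interval_iso (x z : T) k (alpha : T -> cube k) : Prop :=
  (forall y y', x <= y <= z -> x <= y' <= z -> (y <= y') = cle (alpha y) (alpha y'))
  /\ (forall c, exists y, x <= y <= z /\ alpha y = c).
Arguments interval_iso x z {k} alpha.

Definition in_sqP (Sq : forall m n, (cube m -> cube n) -> Prop) n
    (theta : cube n -> T) : Prop :=
  (forall a b, cle a b -> theta a <= theta b) /\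
  exists (x z : T) (k : nat) (alpha : T -> cube k),
    [/\ interval_iso x z alpha,
        (forall a, x <= theta a <= z) &
        Sq n k (fun a => alpha (theta a))].

Arguments in_sqP Sq {n} theta.
Definition sq_el Sq n := {theta : cube n -> T | in_sqP Sq theta}.
End Posets.

Arguments sq_el {d} T Sq n.
Arguments interval_iso {d T} x z {k} alpha.
Arguments in_sqP {d T} Sq {n} theta.

Section Morphisms.
Context (Sq : forall m n, (cube m -> cube n) -> Prop).
Context {d1 d2 : Order.disp_t} {P1 : porderType d1} {P2 : porderType d2}.

Definition sq_natural (F : forall n, sq_el P1 Sq n -> sq_el P2 Sq n) : Prop :=
  forall m n (g : cube m -> cube n), Sq m n g ->
  forall (th : sq_el P1 Sq n) (th' : sq_el P1 Sq m),
    (forall a, sval th' a = sval th (g a)) ->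
    forall a, sval (F m th') a = sval (F n th) (g a).

(* iota_{P2} o F = ner(phi) o iota_{P1}. *)
Definition sq_over (phi : P1 -> P2) (F : forall n, sq_el P1 Sq n -> sq_el P2 Sq n)
  : Prop := forall n (th : sq_el P1 Sq n) a, sval (F n th) a = phi (sval th a).

Definition sq_lift_unique (phi : P1 -> P2) : Prop :=
  exists F : forall n, sq_el P1 Sq n -> sq_el P2 Sq n,
    [/\ sq_natural F, sq_over phi F &
        forall F' : forall n, sq_el P1 Sq n -> sq_el P2 Sq n,
          sq_natural F' -> sq_over phi F' -> forall n th, F' n th = F n th].

Definition sq_local (phi : P1 -> P2) : Prop :=
  forall (x z : P1) m (alpha : P1 -> cube m), interval_iso x z alpha ->
  exists (x' z' : P2) (m' k : nat) (alpha' : P1 -> cube m') (beta : P2 -> cube k)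
         (h : cube m' -> cube k),
    [/\ interval_iso x z alpha', interval_iso x' z' beta,
        (forall y, x <= y <= z -> x' <= phi y <= z'),
        Sq m' k h &
        forall y, x <= y <= z -> beta (phi y) = h (alpha' y)].
End Morphisms.

(* Main.v *)
Require Import Defs.
From HB Require Import structures.
From mathcomp Require Import all_boot all_order all_fingroup.
From Stdlib Require Import FunctionalExtensionality ProofIrrelevance IndefiniteDescription.
Import Order.Theory.
Local Open Scope order_scope.

Definition Pm n (s : 'I_n -> 'I_n) : cube n -> cube n := fun a => [ffun j => a (s j)].
Arguments Pm {n} s.

Lemma D1_ext m n (f g : cube m -> cube n) : D1tau f -> f =1 g -> D1tau g.
Proof. by move=> H E; have <- : f = g by apply: functional_extensionality. Qed.
Arguments D1_ext {m n f g}.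

Lemma Pm_comp n (s t : 'I_n -> 'I_n) :
  D1tau (Pm s) -> D1tau (Pm t) -> D1tau (Pm (fun j => s (t j))).
Proof.
move=> Hs Ht; refine (D1_ext (D1_comp _ _ _ _ _ Hs Ht) _) => a.
by apply/ffunP => j; rewrite !ffunE.
Qed.
Arguments Pm_comp {n s t}.

Lemma Pm_fix0 k (s : 'I_k.+1 -> 'I_k.+1) : injective s -> s ord0 = ord0 ->
  (forall s' : 'I_k -> 'I_k, injective s' -> D1tau (Pm s')) -> D1tau (Pm s).
Proof.
move=> sinj s0 IH.
pose s' j := odflt j (unlift ord0 (s (lift ord0 j))).
have Hs' j : lift ord0 (s' j) = s (lift ord0 j).
  rewrite /s'; case: unliftP => [j' -> //| E].
  by move: E; rewrite -{2}s0 => /sinj /eqP; rewrite eq_sym (negbTE (neq_lift _ _)).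
have s'inj : injective s'.
  by move=> a b E; apply: (@lift_inj _ ord0); apply: sinj; rewrite -!Hs' E.
have := D1_prod _ _ _ _ _ _ (D1_id 1) (IH s' s'inj).
move=> H; apply: (D1_ext H) => x; apply/ffunP => i.
rewrite /cube_prod !ffunE; case: splitP => j Hij.
- rewrite ffunE; congr (x _); apply: val_inj => /=.
  have -> : i = ord0 by apply: val_inj; rewrite /= Hij; case: j {Hij} => -[].
  by rewrite s0 (ord1 j).
- rewrite !ffunE; congr (x _).
  have -> : s i = lift ord0 (s' j) by rewrite Hs'; congr s; apply: val_inj; rewrite /= Hij.
  by apply: val_inj.
Qed.

Lemma tau_prod k : D1tau (Pm (tperm (ord0 : 'I_k.+2) (@Ordinal k.+2 1 isT))).
Proof.
have H := D1_prod _ _ _ _ _ _ D1_tau (D1_id k).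
apply: (D1_ext H) => x; apply/ffunP => i.
rewrite /cube_prod /cube_tau !ffunE; case: splitP => j Hij.
- rewrite !ffunE; congr (x _); apply: val_inj => /=.
  case: j Hij => -[|[|//]] ? /= Hij; case: tpermP => [/(congr1 val)|/(congr1 val)|h0 h1] /=;
    rewrite ?Hij //; exfalso; [apply: h0 | apply: h1]; apply: val_inj; by rewrite /= Hij.
- cbv beta; rewrite ffunE; f_equal; apply: val_inj => /=.
  rewrite tpermD ?Hij //; apply/eqP => /(congr1 val) /=; rewrite Hij //.
Qed.

Lemma Pm_tperm0 k (j : 'I_k.+1) : j != ord0 ->
  (forall s' : 'I_k -> 'I_k, injective s' -> D1tau (Pm s')) ->
  D1tau (Pm (tperm j ord0)).
Proof.
case: k j => [|k] j j0 IH.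
  by rewrite ord1 eqxx in j0.
pose o1 := @Ordinal k.+2 1 isT.
pose r := tperm o1 j.
have r0 : r ord0 = ord0 by rewrite tpermD // eq_sym.
have Hr : D1tau (Pm r) by apply: Pm_fix0 => //; exact: perm_inj.
have E : forall i, tperm j ord0 i = r (tperm ord0 o1 (r i)).
  move=> i; have := congr1 (fun p : {perm _} => p i) (tpermJ ord0 o1 r).
  rewrite conjgE tpermV !permM r0 tpermL => ->.
  by rewrite tpermC.
have H := Pm_comp (Pm_comp Hr (tau_prod k)) Hr.
by refine (D1_ext H _) => a; apply/ffunP => i; rewrite !ffunE E.
Qed.

Lemma Pm_all n (s : 'I_n -> 'I_n) : injective s -> D1tau (Pm s).
Proof.
elim: n s => [|k IH] s sinj.
  by refine (D1_ext (D1_id 0) _) => a; apply/ffunP => -[].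
have [s0|s0] := eqVneq (s ord0) ord0; first exact: Pm_fix0.
pose tp := tperm (s ord0) ord0.
pose t i := tp (s i).
have tinj : injective t by move=> a b /perm_inj /sinj.
have Ht : D1tau (Pm t).
  apply: Pm_fix0 => //; by rewrite /t /tp tpermL.
have Htp : D1tau (Pm tp) by exact: Pm_tperm0.
refine (D1_ext (Pm_comp Htp Ht) _) => a; apply/ffunP => j; rewrite !ffunE /t.
by rewrite tpermK.
Qed.

Definition ee k (i : 'I_k) : cube k := [ffun j => j == i].
Arguments ee {k} i.
Definition z0 k : cube k := [ffun _ => false].

Lemma cle_e k (i : 'I_k) b : cle (ee i) b = b i.
Proof.
apply/forallP/idP => [/(_ i)|bi j]; first by rewrite ffunE eqxx.
by rewrite ffunE; apply/implyP => /eqP ->.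
Qed.

Lemma cle_refl k (a : cube k) : cle a a.
Proof. by apply/forallP => i; apply/implyP. Qed.

Lemma cle_anti k (a b : cube k) : cle a b -> cle b a -> a = b.
Proof.
move=> /forallP H1 /forallP H2; apply/ffunP => i.
by move: (H1 i) (H2 i); case: (a i); case: (b i).
Qed.

Lemma cle0 k (b : cube k) : cle (z0 k) b.
Proof. by apply/forallP => i; rewrite ffunE. Qed.

Lemma ee_inj k : injective (@ee k).
Proof.
move=> a b H; have := congr1 (fun f : cube k => f a) H.
by rewrite !ffunE eqxx => /esym/eqP.
Qed.

Lemma iso_D1 k m (g : cube k -> cube m) :
  (forall c c', cle c c' = cle (g c) (g c')) -> (forall d, exists c, g c = d) ->
  D1tau g.
Proof.
move=> Hle Hsur.
have ginj : injective g.
  by move=> a b E; apply: cle_anti; rewrite Hle E cle_refl.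
have [h hK] : {h : cube m -> cube k | forall d, g (h d) = d}.
  exists (fun d => proj1_sig (constructive_indefinite_description _ (Hsur d))).
  by move=> d; exact: proj2_sig (constructive_indefinite_description _ (Hsur d)).
have hinj : injective h by move=> a b E; rewrite -(hK a) -(hK b) E.
have ekm : k = m.
  have c1 := leq_card g ginj; have c2 := leq_card h hinj.
  have : #|{ffun 'I_k -> bool}| = #|{ffun 'I_m -> bool}| by apply/eqP; rewrite eqn_leq c1 c2.
  by rewrite !card_ffun !card_bool !card_ord; apply: expnI.
subst m.
have g0 : g (z0 k) = z0 k.
  have [c Hc] := Hsur (z0 k).
  by apply: cle_anti; [rewrite -{2}Hc -Hle; exact: cle0 | exact: cle0].
have Hat i : exists j, g (ee i) = ee j.
  case: (pickP (fun j => g (ee i) j)) => [j gj|H0]; last first.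
    have : g (ee i) = g (z0 k).
      by rewrite g0; apply/ffunP => j; rewrite ffunE; apply/negbTE/negP => /(_ =P true); rewrite H0.
    by move/ginj/(congr1 (fun f : cube k => f i)); rewrite !ffunE eqxx.
  exists j; have [c Hc] := Hsur (ee j).
  have : cle c (ee i) by rewrite Hle Hc cle_e.
  move/forallP => Hci.
  case ci: (c i).
  - have -> : ee i = c.
      apply/ffunP => l; rewrite ffunE; have := Hci l; rewrite ffunE.
      by case: eqP => [->|_]; [rewrite ci | case: (c l)].
    by [].
  - have c0 : c = z0 k.
      apply/ffunP => l; rewrite ffunE; have := Hci l; rewrite ffunE.
      by case: eqP => [->|_]; [rewrite ci | case: (c l)].
    by move: Hc; rewrite c0 g0 => /(congr1 (fun f : cube k => f j)); rewrite !ffunE eqxx.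
pose sg i := odflt i [pick j | g (ee i) == ee j].
have Hsg i : g (ee i) = ee (sg i).
  rewrite /sg; case: pickP => [j /eqP //|H0].
  by have [j Hj] := Hat i; move: (H0 j); rewrite Hj eqxx.
have sginj : injective sg.
  by move=> a b E; apply: ee_inj; apply: ginj; rewrite !Hsg E.
pose tau := invF sginj.
have tauinj : injective tau by apply: (can_inj (f_invF sginj)).
refine (D1_ext (Pm_all _ _ tauinj) _) => a; apply/ffunP => j; rewrite ffunE.
by have := Hle (ee (tau j)) a; rewrite Hsg f_invF !cle_e.
Qed.

Lemma iso_inv {d} {T : porderType d} (x z : T) k (alpha : T -> cube k) :
  interval_iso x z alpha ->
  {th : cube k -> T | forall c, (x <= th c <= z) /\ alpha (th c) = c}.
Proof.
move=> [_ Hs].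
exists (fun c => proj1_sig (constructive_indefinite_description _ (Hs c))).
by move=> c; exact: proj2_sig (constructive_indefinite_description _ (Hs c)).
Qed.
Arguments iso_inv {d T x z k alpha}.

Lemma iso_inj {d} {T : porderType d} (x z : T) k (alpha : T -> cube k) y y' :
  interval_iso x z alpha -> x <= y <= z -> x <= y' <= z -> alpha y = alpha y' -> y = y'.
Proof.
move=> [Hle _] Hy Hy' E; apply/le_anti.
by rewrite (Hle y y') // (Hle y' y) // E cle_refl.
Qed.
Arguments iso_inj {d T x z k alpha y y'}.

Theorem mainTheorem13 (Sq : forall m n, (cube m -> cube n) -> Prop)
  (HSq : cube_cat Sq)
  (d1 d2 : Order.disp_t) (P1 : porderType d1) (P2 : porderType d2)
  (phi : P1 -> P2) (Hphi : {homo phi : x y / x <= y}) :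
  sq_lift_unique Sq phi <-> sq_local Sq phi.
Proof.
split.
- move=> [F [_ Hover _]] x z m alpha Hal.
  have [th Hth] := iso_inv Hal.
  have thK y : x <= y <= z -> th (alpha y) = y.
    by move=> Hy; apply: (iso_inj Hal (Hth _).1 Hy (Hth _).2).
  have Hin : in_sqP Sq th.
    split.
      move=> a b ab; have [Hle _] := Hal.
      by rewrite Hle ?(Hth a).2 ?(Hth b).2 //; [exact: (Hth a).1 | exact: (Hth b).1].
    exists x, z, m, alpha; split => //; first by move=> a; exact: (Hth a).1.
    have -> : (fun a => alpha (th a)) = (fun a => a).
      by apply: functional_extensionality => a; exact: (Hth a).2.
    by case: HSq => H1 _ _; apply: H1; exact: D1_id.
  have Hf := Hover m (exist _ th Hin).
  move: (F m (exist _ th Hin)) Hf => [f [_ [x' [z' [k [beta [Hb Hr Hs]]]]]]] /= Hf.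
  exists x', z', m, k, alpha, beta, (fun a => beta (f a)); split => //.
  + by move=> y Hy; rewrite -(thK y Hy) -Hf; exact: Hr.
  + by move=> y Hy; rewrite Hf thK.
- move=> Hloc.
  have Hin n (th : sq_el P1 Sq n) : in_sqP Sq (fun a => phi (sval th a)).
    case: th => th [Hmono [x [z [k [alpha [Hal Hr Hs]]]]]] /=.
    split; first by move=> a b ab; apply: Hphi; apply: Hmono.
    have [x' [z' [m' [k' [alpha' [beta [h [Hal' Hb Hr' Hh Heq]]]]]]]] := Hloc x z k alpha Hal.
    exists x', z', k', beta; split => //.
      by move=> a; apply: Hr'; exact: Hr.
    have [inv Hinv] := iso_inv Hal.
    pose g c := alpha' (inv c).
    have Hg : Sq k m' g.
      case: HSq => H1 _ _; apply: H1; apply: iso_D1.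
      * move=> c c'; have [Hle _] := Hal; have [Hle' _] := Hal'.
        rewrite -{1}(Hinv c).2 -{1}(Hinv c').2 -Hle ?(Hinv _).1 //.
        by rewrite Hle' ?(Hinv _).1.
      * move=> e; have [_ Hs'] := Hal'; have [y [Hy <-]] := Hs' e.
        exists (alpha y); rewrite /g; congr alpha'.
        exact: (iso_inj Hal (Hinv _).1 Hy (Hinv _).2).
    have -> : (fun a => beta (phi (th a))) = (fun a => h ((fun b => g (alpha (th b))) a)).
      apply: functional_extensionality => a /=; rewrite Heq ?Hr // /g; congr (h (alpha' _)).
      by apply: (iso_inj Hal (Hr a) (Hinv _).1); rewrite (Hinv _).2.
    case: HSq => _ _ Hc.
    exact: (Hc _ _ _ _ _ (Hc _ _ _ _ _ Hs Hg) Hh).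
  exists (fun n th => exist _ _ (Hin n th)); split.
  + by move=> m n g _ th th' E a /=; rewrite E.
  + by [].
  + move=> F' _ Hover n th; case E: (F' n th) => [f Hf].
    have ef : f = fun a => phi (sval th a).
      by apply: functional_extensionality => a; have := Hover n th a; rewrite E.
    subst f; congr exist; apply: proof_irrelevance.
Qed.
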